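(* For every positive integer $k$, $f(k)\geq \frac{k(k-2)}{3}$.
   Context: A $k$-colouring of the edges of the complete graph $K_n$ (colours from $[k]=\{1,\dots,k\}$) is called connected if for each colour $i\in[k]$ the edges of colour $i$ form a connected spanning subgraph of $K_n$ (i.e. a connected graph on all $n$ vertices). A triangle is multicoloured if its three edges have three distinct colours; its colour set is the set of these three colours. $f(k)$ denotes the minimum, over all $n$ and all connected $k$-colourings of $K_n$, of the number of distinct $3$-sets of colours that occur as colour sets of multicoloured triangles. *)

(* Defs.v *)
From mathcomp Require Import all_boot all_order all_algebra.
Set Implicit Arguments. Unset Strict Implicit. Unset Printing Implicit Defensive.

(* An edge colouring of K_n with colours 'I_k (standing for [k] = {1..k}).
   c x y is the colour of the edge {x,y} (x != y); symmetry is required,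
   values on the diagonal are irrelevant. *)
Definition symmetric_colouring (n k : nat) (c : 'I_n -> 'I_n -> 'I_k) : Prop :=
  forall x y : 'I_n, c x y = c y x.

Definition colour_rel (n k : nat) (c : 'I_n -> 'I_n -> 'I_k) (i : 'I_k) : rel 'I_n :=
  fun x y => (x != y) && (c x y == i).

Definition connected_colouring (n k : nat) (c : 'I_n -> 'I_n -> 'I_k) : Prop :=
  forall (i : 'I_k) (x y : 'I_n), connect (colour_rel c i) x y.

Definition multicoloured (n k : nat) (c : 'I_n -> 'I_n -> 'I_k) (x y z : 'I_n) : bool :=
  [&& x != y, y != z, x != z,
      c x y != c y z, c x y != c x z & c y z != c x z].

Definition triangle_colour_sets (n k : nat) (c : 'I_n -> 'I_n -> 'I_k)
  : {set {set 'I_k}} :=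
  [set [set c t.1.1 t.1.2; c t.1.2 t.2; c t.1.1 t.2]
     | t : 'I_n * 'I_n * 'I_n & multicoloured c t.1.1 t.1.2 t.2].

(* Main.v *)
Require Import Defs.
From mathcomp Require Import all_boot all_order all_algebra.
From mathcomp Require Import zify.
Set Implicit Arguments. Unset Strict Implicit. Unset Printing Implicit Defensive.

Lemma cross (T : finType) (e : rel T) (X : pred T) x y :
  connect e x y -> x \in X -> y \notin X ->
  exists a b, [/\ a \in X, b \notin X & e a b].
Proof.
case/connectP => p; elim: p x => [|z p IH] x /=; first by move=> _ -> ->.
case/andP => exz pz ey xX yX.
case: (boolP (z \in X)) => zX; first exact: IH zX yX.
by exists x, z.
Qed.

Lemma connect_pres (T : finType) (e : rel T) (P : T -> Prop) :
  (forall a b, P a -> e a b -> P b) -> forall x y, connect e x y -> P x -> P y.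
Proof.
move=> H x y /connectP [p]; elim: p x => [|z p IH] x /=; first by move=> _ -> .
by case/andP => exz pz ey Px; apply: (IH z pz ey); apply: H exz.
Qed.

Section Gallai.
Variable T : finType.
Variable d : T -> T -> nat.
Hypothesis dsym : forall x y, d x y = d y x.

Definition relS (S : {set T}) (col : nat) : rel T :=
  fun a b => [&& a \in S, b \in S, a != b & d a b == col].
Definition conn (S : {set T}) col :=
  [forall x in S, forall y in S, connect (relS S col) x y].
Definition rainbow (S : {set T}) :=
  [exists x in S, exists y in S, exists z in S,
     [&& d x y != d y z, d x y != d x z & d y z != d x z]].

Lemma relS_sym S col : symmetric (relS S col).
Proof.
move=> a b; rewrite /relS dsym eq_sym.
by case: (a \in S); case: (b \in S).
Qed.

Lemma connP S col x y : conn S col -> x \in S -> y \in S -> connect (relS S col) x y.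
Proof. by move=> /forallP /(_ x) /implyP H xS yS; move: (H xS) => /forallP /(_ y) /implyP; apply. Qed.

Lemma norb S x y z : ~~ rainbow S -> x \in S -> y \in S -> z \in S ->
  d x y != d y z -> d y z != d x z -> d x y = d x z.
Proof.
move=> nr xS yS zS h1 h2; apply/eqP; apply: contraNT nr => h3.
apply/existsP; exists x; rewrite xS /=; apply/existsP; exists y; rewrite yS /=.
by apply/existsP; exists z; rewrite zS /= h1 h2 h3.
Qed.

Lemma edge_from S col u : conn S col -> 1 < #|S| -> u \in S ->
  exists z, [/\ z \in S, z != u & d u z = col].
Proof.
move=> cS /card_gt1P [a [b [aS bS ab]]] uS.
have [v [vS vu]] : exists v, v \in S /\ v != u.
  case: (eqVneq a u) => [au|au]; last by exists a.
  by exists b; split => //; rewrite -au eq_sym.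
have := cross (X := pred1 u) (connP cS uS vS) (eqxx u).
rewrite /= vu => /(_ isT) [a' [b' [au b'u]]].
rewrite inE in au; move/eqP: au => au; subst a'.
by case/and4P => _ b'S _ /eqP <-; exists b'; rewrite b'S; rewrite inE in b'u.
Qed.

Lemma rainbow_sub (S S' : {set T}) : S' \subset S -> rainbow S' -> rainbow S.
Proof.
move=> sub /existsP [x /andP [xS /existsP [y /andP [yS /existsP [z /andP [zS H]]]]]].
apply/existsP; exists x; rewrite (subsetP sub _ xS) /=.
apply/existsP; exists y; rewrite (subsetP sub _ yS) /=.
by apply/existsP; exists z; rewrite (subsetP sub _ zS) /=.
Qed.


Lemma core (S : {set T}) u red g1 g2 : red != g1 -> red != g2 -> g1 != g2 ->
  conn S red -> conn S g1 -> conn S g2 -> u \in S ->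
  ~~ conn (S :\ u) red -> ~~ rainbow S -> False.
Proof.
move=> rg1 rg2 g12 cred cg1 cg2 uS ncS nr.
set S' := S :\ u. set e := relS S' red.
have S'S : forall z, z \in S' -> z \in S.
  by move=> z; rewrite /S' in_setD1 => /andP [].
have uS' : u \notin S' by rewrite /S' in_setD1 eqxx.
move: ncS => /forallPn [x0]; rewrite negb_imply => /andP [x0S /forallPn [y0]].
rewrite negb_imply => /andP [y0S nc0].
have csym : connect_sym e := sym_connect_sym (relS_sym S' red).
have F1 : forall a b, a \in S' -> b \in S' -> a != b -> d a b = red -> connect e a b.
  by move=> a b aS bS ab dab; apply: connect1; rewrite /e /relS aS bS ab dab eqxx.
have F2 : forall z z' w, connect e z z' -> w \in S' -> ~~ connect e z w ->
    d w z' = d w z.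
  move=> z z' w czz' wS ncw.
  suff step : forall a b, (connect e z a /\ d w a = d w z) -> e a b ->
      (connect e z b /\ d w b = d w z).
    by have [_ ->] := connect_pres step czz' (conj (connect0 e z) erefl).
  move=> a b [cza dwa] eab; have czb := connect_trans cza (connect1 eab).
  split=> //; move: eab => /and4P [aS bS ab /eqP dab].
  have wa : d w a != red.
    apply/eqP => h; apply: (negP ncw); apply: (connect_trans cza).
    apply: F1 => //; last by rewrite dsym.
    by apply/eqP => aw; subst a; rewrite cza in ncw.
  have wb : d w b != red.
    apply/eqP => h; apply: (negP ncw); apply: (connect_trans czb).
    apply: F1 => //; last by rewrite dsym.
    by apply/eqP => bw; subst b; rewrite czb in ncw.
  rewrite -dwa; symmetry; apply: (norb nr (S'S _ wS) (S'S _ aS) (S'S _ bS)).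
    by rewrite dab.
  by rewrite dab eq_sym.
have F3 : forall w, w \in S' -> exists r, [/\ r \in S', connect e w r & d u r = red].
  move=> w wS; have cwu := connP cred (S'S _ wS) uS.
  have hX : w \in [pred z | (z \in S') && connect e w z] by rewrite unfold_in /= wS connect0.
  have huX : u \notin [pred z | (z \in S') && connect e w z] by rewrite unfold_in /= (negbTE uS').
  have := cross cwu hX huX => -[a [b [/andP [aS cwa] bX]]].
  case/and4P => _ bS ab /eqP dab.
  case: (eqVneq b u) => [bu|bu].
    by subst b; exists a; split => //; rewrite dsym.
  have bS' : b \in S' by rewrite /S' in_setD1 bu bS.
  move: bX; rewrite unfold_in /= bS' /=; move/negP; case.
  by apply: (connect_trans cwa); apply: F1.
have L : forall x w, x \in S' -> w \in S' -> ~~ connect e x w ->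
    d u x = red \/ d u x = d w x.
  move=> x w xS wS ncxw; have [r [rS cwr dur]] := F3 w wS.
  have ncxr : ~~ connect e x r.
    apply/negP => cxr; apply: (negP ncxw); apply: (connect_trans cxr).
    by rewrite csym.
  have drx : d r x = d w x.
    rewrite dsym (F2 w r x cwr xS); first by rewrite dsym.
    by rewrite csym.
  have rxr : d r x != red.
    apply/eqP => h; apply: (negP ncxr); apply: F1 => //; last by rewrite dsym.
    by apply/eqP => xr; subst r; rewrite connect0 in ncxr.
  case: (eqVneq (d r x) (d u x)) => h; first by right; rewrite -h.
  left; rewrite -dur; symmetry; apply: (norb nr uS (S'S _ rS) (S'S _ xS)).
    by rewrite dur eq_sym.
  by [].
have Main : forall x, x \in S' -> d u x = red.
  move=> x xS; apply/eqP; apply: contraT => gneq.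
  have [w [wS ncxw]] : exists w, w \in S' /\ ~~ connect e x w.
    case: (boolP (connect e x x0)) => cx0; last by exists x0.
    exists y0; split => //; apply/negP => cxy; apply: (negP nc0).
    by apply: (connect_trans _ cxy); rewrite csym.
  have H1 : forall w', w' \in S' -> ~~ connect e x w' -> d w' x = d u x.
    move=> w' w'S ncw'; case: (L x w' xS w'S ncw') => h //.
    by rewrite h eqxx in gneq.
  have H2 : forall x', connect e x x' -> forall w', w' \in S' ->
      ~~ connect e x w' -> d w' x' = d u x.
    by move=> x' cxx' w' w'S ncw'; rewrite (F2 x x' w') // H1.
  have H3 : forall x', x' \in S' -> connect e x x' ->
      d u x' = red \/ d u x' = d u x.
    move=> x' x'S cxx'.
    have ncx'w : ~~ connect e x' w.
      by apply/negP => cx'w; apply: (negP ncxw); apply: connect_trans cxx' cx'w.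
    case: (L x' w x'S wS ncx'w) => h; [by left | right].
    by rewrite h (H2 x' cxx' w wS ncxw).
  have [b [cb br bg]] : exists b, [/\ conn S b, b != red & b != d u x].
    case: (eqVneq g1 (d u x)) => h.
      by exists g2; split => //; [rewrite eq_sym | rewrite -h eq_sym].
    by exists g1; split => //; rewrite eq_sym.
  have hX : x \in [pred z | (z \in S') && connect e x z] by rewrite unfold_in /= xS connect0.
  have huX : u \notin [pred z | (z \in S') && connect e x z] by rewrite unfold_in /= (negbTE uS').
  have := cross (connP cb (S'S _ xS) uS) hX huX => -[a [b' [/andP [aS cxa] b'X]]].
  case/and4P => _ b'S ab' /eqP dab'.
  case: (eqVneq b' u) => [b'u|b'u].
    subst b'; case: (H3 a aS cxa) => h.
      by move: br; rewrite -dab' dsym h eqxx.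
    by move: bg; rewrite -dab' dsym h eqxx.
  have b'S' : b' \in S' by rewrite /S' in_setD1 b'u b'S.
  move: b'X; rewrite unfold_in /= b'S' /= => ncb'.
  by move: bg; rewrite -dab' dsym (H2 a cxa b' b'S' ncb') eqxx.
have S2 : 1 < #|S|.
  apply/card_gt1P; exists x0, u; split => //; first exact: S'S.
  by move: x0S; rewrite /S' in_setD1 => /andP [].
have [z [zS zu duz]] := edge_from cg1 S2 uS.
have zS' : z \in S' by rewrite /S' in_setD1 zu zS.
by move: rg1; rewrite -duz (Main z zS') eqxx.
Qed.

Lemma gallai N : forall S : {set T}, #|S| <= N -> 1 < #|S| ->
  forall p q r, p != q -> q != r -> p != r ->
  conn S p -> conn S q -> conn S r -> rainbow S.
Proof.
elim: N => [|N IH] S hN h2 p q r pq qr pr cp cq cr.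
  by move: hN; rewrite leqn0 => /eqP h; rewrite h in h2.
case: (boolP (rainbow S)) => // nr; suff: False by [].
have [u uS] : exists u, u \in S.
  by move: h2 => /card_gt1P [a [b [aS _ _]]]; exists a.
have cS := cardsD1 u S; rewrite uS in cS.
case: (leqP #|S| 2) => hS.
  have [zp [zpS zpu dp]] := edge_from cp h2 uS.
  have [zq [zqS zqu dq]] := edge_from cq h2 uS.
  have h1 : #|S :\ u| <= 1 by move: hS; rewrite cS.
  have zpq : zp = zq.
    move/card_le1_eqP: h1 => H; apply: H;
      by rewrite in_setD1 ?zpu ?zqu ?zpS ?zqS.
  by move: pq; rewrite -dp -dq zpq eqxx.
have hS' : #|S :\ u| <= N by move: hN; rewrite cS.
have hS2 : 1 < #|S :\ u| by move: hS; rewrite cS.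
have nr' : ~~ rainbow (S :\ u).
  by apply: contra nr; apply: rainbow_sub; apply: subD1set.
have := IH (S :\ u) hS' hS2 p q r pq qr pr.
case: (boolP (conn (S :\ u) p)) => hp.
  case: (boolP (conn (S :\ u) q)) => hq.
    case: (boolP (conn (S :\ u) r)) => hr.
      by move=> /(_ isT isT isT); rewrite (negbTE nr').
    move=> _; apply: (core (g1 := p) (g2 := q) _ _ _ cr cp cq uS hr nr);
      by rewrite // eq_sym.
  move=> _; apply: (core (g1 := p) (g2 := r) _ _ _ cq cp cr uS hq nr);
    by rewrite // eq_sym.
move=> _; exact: (core (g1 := q) (g2 := r) pq pr qr cp cq cr uS hp nr).
Qed.

End Gallai.

Ltac rw3 A1 A2 A3 := try rewrite A1; try rewrite A2; try rewrite A3.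

Ltac fin3 A1 A2 A3 :=
  rewrite !inE ?eqxx /=; rw3 A1 A2 A3; rewrite ?orbT;
  split => //;
  apply/subsetP => e; rewrite !inE; case/orP => [/orP [] | ] /eqP ->;
  rewrite ?eqxx; rw3 A1 A2 A3; rewrite ?orbT.

Lemma tri3 (K : finType) (i : K) (A : {set K}) e1 e2 e3 :
  let f e := if e == i then 0 else if e \in A then 1 else 2 in
  f e1 != f e2 -> f e2 != f e3 -> f e1 != f e3 ->
  exists bb, [/\ i \in [set e1; e2; e3], bb \in [set e1; e2; e3], bb \notin A,
     bb != i & [set e1; e2; e3] \subset i |: (bb |: A)].
Proof.
move=> f; rewrite /f.
case: (eqVneq e1 i) => [->|n1]; case: (eqVneq e2 i) => [->|n2];
  case: (eqVneq e3 i) => [->|n3]; rewrite ?eqxx //;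
  try rewrite (negbTE n1); try rewrite (negbTE n2); try rewrite (negbTE n3);
  case A1: (e1 \in A); case A2: (e2 \in A); case A3: (e3 \in A) => //= h12 h23 h13.
all: try match goal with H : is_true false |- _ => by [] end.
all: first [ by exists e1; fin3 A1 A2 A3 | by exists e2; fin3 A1 A2 A3 | by exists e3; fin3 A1 A2 A3 ].

Qed.


Section App.
Variables (n k : nat) (c : 'I_n -> 'I_n -> 'I_k).
Hypothesis csym : symmetric_colouring c.
Hypothesis ccon : connected_colouring c.
Hypothesis hn : 1 < n.

Lemma cut_lemma (i : 'I_k) (A : {set 'I_k}) a0 b0 :
  i \notin A -> a0 \in A -> b0 \notin A -> b0 != i ->
  exists s bb, [/\ s \in triangle_colour_sets c, i \in s, bb \notin A, bb != i &
     (bb \in s) && (s \subset i |: (bb |: A))].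
Proof.
move=> iA a0A b0A b0i.
pose f (e : 'I_k) := if e == i then 0 else if e \in A then 1 else 2.
pose d x y := f (c x y).
have dsym : forall x y, d x y = d y x by move=> x y; rewrite /d csym.
have conn_of : forall (col : 'I_k) m, f col = m -> conn d [set: 'I_n] m.
  move=> col m fm; apply/forallP => x; apply/implyP => _; apply/forallP => y.
  apply/implyP => _.
  apply: (connect_sub _ (ccon col x y)) => a b /andP [ab /eqP cab].
  by apply: connect1; rewrite /relS !inE ab /d cab fm eqxx.
have a0i : a0 != i by apply: contraNneq iA => <-.
have := @gallai _ d dsym #|[set: 'I_n]| [set: 'I_n] (leqnn _) _ 0 1 2 isT isT isT
  (conn_of i 0 _) (conn_of a0 1 _) (conn_of b0 2 _).
rewrite cardsT card_ord /f eqxx (negbTE a0i) a0A (negbTE b0i) (negbTE b0A).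
move=> /(_ hn erefl erefl erefl).
case/existsP => x /andP [_ /existsP [y /andP [_ /existsP [z /andP [_ /and3P [h1 h2 h3]]]]]].
have [bb [iS bbS bbA bbi sub]] := tri3 h1 h3 h2.
exists [set c x y; c y z; c x z], bb; split => //; last by rewrite bbS sub.
apply/imsetP; exists (x, y, z) => //; rewrite inE /multicoloured /=.
apply/and3P; split; [ | | apply/and4P; split].
- by apply: contraNneq h3 => ->.
- by apply: contraNneq h2 => ->.
- by apply: contraNneq h1 => ->; rewrite /d csym.
- by apply: contraNneq h1; rewrite /d => ->.
- by apply: contraNneq h2; rewrite /d => ->.
- by apply: contraNneq h3; rewrite /d => ->.
Qed.

Lemma count_i (i : 'I_k) : 1 < k ->
  k - 2 <= #|[set s in triangle_colour_sets c | i \in s]|.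
Proof.
move=> hk.
set E := [set s in triangle_colour_sets c | i \in s].
pose W := [set~ i].
pose cnt (A : {set 'I_k}) := #|[set s in E | s \subset i |: A]|.
have cW : #|W| = k.-1 by rewrite cardsC1 card_ord.
suff H : forall t, t < #|W| -> exists A : {set 'I_k}, [/\ A \subset W, #|A| = t.+1 & t <= cnt A].
  have [|A [_ _ hA]] := H (#|W|.-1); first by rewrite cW; lia.
  apply: leq_trans _ (leq_trans hA _); first by rewrite cW; lia.
  by apply: subset_leq_card; apply/subsetP => s; rewrite inE => /andP [].
elim => [|t IH] ht.
  have [w wW] : exists w, w \in W by apply/card_gt0P.
  by exists [set w]; rewrite cards1 sub1set wW.
have [A [AW cA hA]] := IH (ltnW ht).
have [b0 b0W b0A] : exists2 b0, b0 \in W & b0 \notin A.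
  apply/subsetPn; apply: contraTN ht => WA.
  by rewrite -leqNgt -cA subset_leq_card.
have [a0 a0A] : exists a0, a0 \in A by apply/card_gt0P; rewrite cA.
have iA : i \notin A.
  by apply/negP => iA; move: (subsetP AW _ iA); rewrite !inE eqxx.
have b0i : b0 != i by move: b0W; rewrite !inE.
have [s [bb [sT iS bbA bbi /andP [bbs sub]]]] := cut_lemma iA a0A b0A b0i.
exists (bb |: A); split.
- by rewrite subUset sub1set AW !inE bbi.
- by rewrite cardsU1 bbA cA.
have sX : s \notin [set s' in E | s' \subset i |: A].
  rewrite inE negb_and; apply/orP; right; apply/negP => /subsetP /(_ _ bbs).
  by rewrite !inE (negbTE bbi) (negbTE bbA).
apply: (leq_trans _ (_ : #|s |: [set s' in E | s' \subset i |: A]| <= _)).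
  by rewrite cardsU1 sX add1n ltnS.
apply: subset_leq_card; apply/subsetP => s'; rewrite !inE => /orP [/eqP ->|].
  by rewrite sT iS sub.
case/andP => /andP [-> ->] /subsetP H /=; apply/subsetP => e /H.
by rewrite !inE => /orP [->|->]; rewrite ?orbT.
Qed.

End App.

Import GRing.Theory Num.Theory.

Theorem corollary2 (k : nat) (hk : (0 < k)%N) (n : nat) (hn : (2 <= n)%N)
  (c : 'I_n -> 'I_n -> 'I_k) :
  symmetric_colouring c -> connected_colouring c ->
  ((k%:Z * (k%:Z - 2%:Z)) <= 3%:Z * (#|triangle_colour_sets c|)%:Z)%R.
Proof.
move=> csym ccon.
case: (leqP k 1) => hk1.
  nia.
set T := triangle_colour_sets c.
have H : (k * (k - 2) <= 3 * #|T|)%N.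
  have -> : (k * (k - 2) = \sum_(i < k) (k - 2))%N by rewrite sum_nat_const card_ord.
  apply: leq_trans.
    by apply: leq_sum => i _; apply: (count_i csym ccon hn i hk1).
  have -> : (\sum_(i < k) #|[set s in T | i \in s]| =
             \sum_(i < k) \sum_(s in T) (i \in s : nat))%N.
    apply: eq_bigr => i _; rewrite -sum1_card.
    rewrite (eq_bigl (fun s => (s \in T) && (i \in s))); last by move=> s; rewrite inE.
    by rewrite big_mkcondr /=; apply: eq_bigr => s _; case: (i \in s).
  rewrite exchange_big /= mulnC -sum_nat_const.
  apply: leq_sum => s sT.
  rewrite (_ : \sum_(i < k) (i \in s : nat) = #|s|)%N; last first.
    by rewrite -sum1_card [RHS]big_mkcond /=; apply: eq_bigr => i _; case: (i \in s).
  case/imsetP: sT => t _ ->.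
  apply: leq_trans (leq_card_setU _ _).1 _; rewrite cards1 -[3]/(2 + 1) leq_add2r.
  by apply: leq_trans (leq_card_setU _ _).1 _; rewrite !cards1.
by rewrite subzn // -!PoszM lez_nat.
Qed.
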